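(* Let $D$ be a division algebra and let $\sigma\in\mathrm{Aut}(D)$ be of infinite inner order. Then the tuple $(\sigma,\sigma^{-1})$ is not automorphically normalizable over $D$.
   Context: All rings are associative with unity. An automorphism $\sigma$ of $D$ has finite inner order if $\sigma^k$ is an inner automorphism $r\mapsto crc^{-1}$ ($c\in D^\times$) for some positive integer $k$; otherwise it has infinite inner order. For commuting automorphisms $\sigma_1,\ldots,\sigma_n$ of $D$, $D[t_1,\ldots,t_n;\sigma_1,\ldots,\sigma_n]$ is the skew polynomial ring in pairwise commuting variables with $t_ia=\sigma_i(a)t_i$ for $a\in D$. For a ring $S\supseteq D$, $a\in S$ is automorphic over $D$ with respect to $\tau$ if $ab=\tau(b)a$ for all $b\in D$. Commuting $a_1,\ldots,a_m\in S$ are (left) algebraically independent over $D$ if monomials in them are left linearly independent over $D$. $S$ is automorphically normalizable over $D$ if there exist $m\ge0$ and commuting $a_1,\ldots,a_m\in S$, automorphic over $D$ with respect to pairwise commuting automorphisms, left algebraically independent over $D$, such that $S$ is finitely generated as a left module over the subring $D[a_1,\ldots,a_m]$ generated by $D\cup\{a_1,\ldots,a_m\}$. A tuple $(\sigma_1,\ldots,\sigma_n)$ is automorphically normalizable over $D$ if every quotient of $D[t_1,\ldots,t_n;\sigma_1,\ldots,\sigma_n]$ by a proper two-sided ideal is automorphically normalizable over $D$. *)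

(* Defs.v *)
From HB Require Import structures.
From mathcomp Require Import all_boot all_order all_algebra.
Set Implicit Arguments. Unset Strict Implicit. Unset Printing Implicit Defensive.
Import GRing.Theory.
Local Open Scope ring_scope.

Definition ring_hom (A B : pzRingType) (f : A -> B) : Prop :=
  [/\ {morph f : x y / x + y}, {morph f : x y / x * y} & f 1 = 1].

Definition ring_aut (A : pzRingType) (f : A -> A) : Prop :=
  ring_hom f /\ bijective f.

Definition division_ring (D : unitRingType) : Prop :=
  forall x : D, x != 0 -> x \is a GRing.unit.

Definition finite_inner_order (D : unitRingType) (sigma : D -> D) : Prop :=
  exists k : nat, (0 < k)%N /\
    exists c : D, c \is a GRing.unit /\ forall r, iter k sigma r = c * r * c^-1.

Definition monom (S : pzRingType) (m n : nat) (a : 'I_m -> S)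
  (e : {ffun 'I_m -> 'I_n}) : S := \prod_(i < m) a i ^+ e i.

Definition left_alg_indep (D S : pzRingType) (j : D -> S) (m : nat)
  (a : 'I_m -> S) : Prop :=
  forall (n : nat) (c : {ffun 'I_m -> 'I_n} -> D),
    \sum_(e : {ffun 'I_m -> 'I_n}) j (c e) * monom a e = 0 -> forall e, c e = 0.

Definition left_monom_span (D S : pzRingType) (j : D -> S) (m : nat)
  (a : 'I_m -> S) : Prop :=
  forall s : S, exists (n : nat) (c : {ffun 'I_m -> 'I_n} -> D),
    s = \sum_(e : {ffun 'I_m -> 'I_n}) j (c e) * monom a e.

Definition gen_subring (S : pzRingType) (G : S -> Prop) (x : S) : Prop :=
  forall P : S -> Prop, (forall g, G g -> P g) -> P 1 ->
    (forall u v, P u -> P v -> P (u - v)) ->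
    (forall u v, P u -> P v -> P (u * v)) -> P x.

Definition left_fin_gen (S : pzRingType) (B : S -> Prop) : Prop :=
  exists (k : nat) (g : 'I_k -> S), forall s : S,
    exists b : 'I_k -> S, (forall l, B (b l)) /\ s = \sum_(l < k) b l * g l.

Definition aut_normalizable (D S : pzRingType) (j : D -> S) : Prop :=
  exists (m : nat) (a : 'I_m -> S) (tau : 'I_m -> D -> D),
    (forall i i', a i * a i' = a i' * a i) /\
    (forall i, ring_aut (tau i)) /\
    (forall i i' x, tau i (tau i' x) = tau i' (tau i x)) /\
    (forall i b, a i * j b = j (tau i b) * a i) /\
    left_alg_indep j a /\
    left_fin_gen (gen_subring (fun x => (exists d, x = j d) \/ exists i, x = a i)).

(* R (with embedding iota : D -> R and variables t) is the skew polynomial ring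
   D[t_1,...,t_n; sigma_1,...,sigma_n]: the t_i commute, t_i a = sigma_i(a) t_i,
   and the monomials in the t_i form a basis of R as a left D-module. *)
Definition is_skew_poly_ring (D : pzRingType) (n : nat) (sigma : 'I_n -> D -> D)
  (R : pzRingType) (iota : D -> R) (t : 'I_n -> R) : Prop :=
  [/\ ring_hom iota,
      forall i i', t i * t i' = t i' * t i,
      forall i a, t i * iota a = iota (sigma i a) * t i,
      left_alg_indep iota t &
      left_monom_span iota t].

(* (sigma_1,...,sigma_n) is automorphically normalizable over D: every quotient
   of D[t;sigma] by a proper two-sided ideal, i.e. every nonzero ring S with a
   surjective ring homomorphism phi from D[t;sigma], is automorphically
   normalizable over (the image of) D. *)
Definition aut_normalizable_tuple (D : pzRingType) (n : nat)
  (sigma : 'I_n -> D -> D) : Prop :=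
  forall (R : pzRingType) (iota : D -> R) (t : 'I_n -> R),
    is_skew_poly_ring sigma iota t ->
    forall (S : pzRingType) (phi : R -> S),
      ring_hom phi -> (forall s : S, exists r : R, phi r = s) -> (1 : S) != 0 ->
      aut_normalizable (fun d => phi (iota d)).

Definition pair_fun (T : Type) (f g : T) : 'I_2 -> T :=
  fun i => if val i == 0%N then f else g.

(* Main.v *)
From HB Require Import structures.
Require Import Defs.
From mathcomp Require Import all_boot all_order all_algebra.
From mathcomp Require Import boolp zify.
From Stdlib Require Classical_Prop.
Set Implicit Arguments. Unset Strict Implicit. Unset Printing Implicit Defensive.
Import GRing.Theory.
Local Open Scope ring_scope.

Section Hom.
Variables (D E : pzRingType) (f : D -> E) (hf : ring_hom f).
Lemma hom0 : f 0 = 0.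
Proof. case: hf => hA _ _; apply: (addrI (f 0)); by rewrite -hA !addr0. Qed.
Lemma homN x : f (- x) = - f x.
Proof. case: hf => hA _ _; apply: (addrI (f x)); by rewrite -hA !subrr hom0. Qed.
Lemma homD x y : f (x + y) = f x + f y. Proof. by case: hf. Qed.
Lemma homB x y : f (x - y) = f x - f y. Proof. by rewrite homD homN. Qed.
Lemma homM x y : f (x * y) = f x * f y. Proof. by case: hf. Qed.
Lemma hom1 : f 1 = 1. Proof. by case: hf. Qed.
Lemma hom_sum (I : Type) (r : seq I) (F : I -> D) :
  f (\sum_(i <- r) F i) = \sum_(i <- r) f (F i).
Proof. elim: r => [|a r IH]; first by rewrite !big_nil hom0.
by rewrite !big_cons homD IH. Qed.
End Hom.

Lemma iter_hom (D : pzRingType) (f : D -> D) n : ring_hom f -> ring_hom (iter n f).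
Proof.
move=> hf; elim: n => [|n [hA hM h1]]; first by split.
split.
- by move=> x y; rewrite !iterS hA homD.
- by move=> x y; rewrite !iterS hM homM.
- by rewrite iterS h1 hom1.
Qed.

Lemma inv_hom (D : pzRingType) (f g : D -> D) : ring_hom f -> cancel f g -> cancel g f -> ring_hom g.
Proof.
move=> hf c1 c2; split.
- by move=> x y; apply: (can_inj c1); rewrite (homD hf) !c2.
- by move=> x y; apply: (can_inj c1); rewrite (homM hf) !c2.
- by apply: (can_inj c1); rewrite (hom1 hf) c2.
Qed.

Section Sp.
Variables (D : pzRingType) (s si : D -> D).
Hypotheses (hs : ring_hom s) (c1 : cancel s si) (c2 : cancel si s).

Definition sp (z : int) (x : D) : D :=
  match z with Posz n => iter n s x | Negz n => iter n.+1 si x end.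

Lemma sp0 x : sp 0 x = x. Proof. by []. Qed.

Lemma hsi : ring_hom si. Proof. exact: inv_hom hs c1 c2. Qed.

Lemma sp_hom z : ring_hom (sp z).
Proof. case: z => n /=; [exact: iter_hom | exact: (iter_hom n.+1 hsi)]. Qed.

Lemma iter_si_s n y : iter n si (s y) = s (iter n si y).
Proof. elim: n => [|n IH] //=; by rewrite IH c1 c2. Qed.
Lemma iter_s_si n y : iter n s (si y) = si (iter n s y).
Proof. elim: n => [|n IH] //=; by rewrite IH c1 c2. Qed.

Lemma sp_s z y : sp z (s y) = s (sp z y).
Proof. case: z => n /=.
- by rewrite -iterSr.
- by rewrite iter_si_s c1 c2.
Qed.
Lemma sp_si z y : sp z (si y) = si (sp z y).
Proof. case: z => n /=.
- by rewrite iter_s_si.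
- by rewrite -iterSr.
Qed.

Lemma sp_S z x : sp (z + 1) x = s (sp z x).
Proof.
case: z => n.
  by have -> : (n%:Z + 1 = (n.+1)%:Z) by lia.
case: n => [|n]; first by rewrite /= c2.
have -> : Negz n.+1 + 1 = Negz n by rewrite !NegzE; lia.
by rewrite /= c2.
Qed.

Lemma sp_P z x : sp (z - 1) x = si (sp z x).
Proof. by rewrite -{2}(subrK 1 z) sp_S c1. Qed.

Lemma sp_add z w x : sp (z + w) x = sp z (sp w x).
Proof.
case: w => n.
  elim: n x => [|n IH] x; first by rewrite addr0.
  have -> : z + n.+1%:Z = (z + n) + 1 by lia.
  by rewrite sp_S IH -sp_s.
elim: n x => [|n IH] x.
  have -> : z + Negz 0 = z - 1 by rewrite NegzE; lia.
  by rewrite sp_P -sp_si.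
have -> : z + Negz n.+1 = (z + Negz n) - 1 by rewrite !NegzE; lia.
by rewrite sp_P IH -sp_si.
Qed.

Lemma sp_K z x : sp z (sp (- z) x) = x.
Proof. by rewrite -sp_add subrr. Qed.
Lemma sp_K' z x : sp (- z) (sp z x) = x.
Proof. by rewrite -sp_add addNr. Qed.

End Sp.

Record Act (D : pzRingType) := MkAct {
  aX : Type; aK : Type;
  act : aX -> aK -> aX; kadd : aK -> aK -> aK; k0 : aK;
  wt : aX -> D -> D; kw : aK -> D -> D;
  act0 : forall x, act x k0 = x;
  actA : forall x k k', act (act x k) k' = act x (kadd k k');
  wt_hom : forall x, ring_hom (wt x);
  wtK : forall x k c, wt (act x k) c = wt x (kw k c) }.

Section Gen.
Variables (D : pzRingType) (A : Act D).
Local Notation X := (aX A).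
Local Notation K := (aK A).

Definition rep (u : (X -> D) -> X -> D) : Prop :=
  exists L : seq (D * K), forall f x, u f x = \sum_(y <- L) wt x y.1 * f (act x y.2).

Lemma rep_zero : rep (fun f x => 0).
Proof. by exists [::] => f x; rewrite big_nil. Qed.

Lemma rep_id : rep (fun f => f).
Proof.
exists [:: (1, k0 A)] => f x; by rewrite big_cons big_nil addr0 /= (hom1 (wt_hom x)) mul1r act0.
Qed.

Lemma rep_add u v : rep u -> rep v -> rep (fun f x => u f x + v f x).
Proof.
move=> [L1 h1] [L2 h2]; exists (L1 ++ L2) => f x; by rewrite big_cat h1 h2.
Qed.

Lemma rep_opp u : rep u -> rep (fun f x => - u f x).
Proof.
move=> [L h]; exists [seq (- y.1, y.2) | y <- L] => f x.
rewrite big_map h -sumrN; apply: eq_bigr => y _ /=.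
by rewrite (homN (wt_hom x)) mulNr.
Qed.

Lemma rep_comp u v : rep u -> rep v -> rep (fun f => u (v f)).
Proof.
move=> [L1 h1] [L2 h2].
exists [seq (y.1 * kw y.2 z.1, kadd y.2 z.2) | y <- L1, z <- L2] => f x.
rewrite big_allpairs_dep h1; apply: eq_bigr => y _; rewrite h2 mulr_sumr.
apply: eq_bigr => z _ /=.
by rewrite (homM (wt_hom x)) wtK actA mulrA.
Qed.

Lemma rep_addf u : rep u -> forall f g x, u (fun x => f x + g x) x = u f x + u g x.
Proof.
move=> [L h] f g x; rewrite !h -big_split; apply: eq_bigr => y _ /=; by rewrite mulrDr.
Qed.

Lemma rep_oppf u : rep u -> forall f x, u (fun x => - f x) x = - u f x.
Proof.
move=> [L h] f x; rewrite !h -sumrN; apply: eq_bigr => y _ /=; by rewrite mulrN.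
Qed.

Definition Op := {u : (X -> D) -> X -> D | rep u}.
End Gen.

HB.instance Definition _ (D : pzRingType) (A : Act D) := gen_eqMixin (Op A).
HB.instance Definition _ (D : pzRingType) (A : Act D) := gen_choiceMixin (Op A).

Section GenRing.
Variables (D : pzRingType) (A : Act D).
Local Notation X := (aX A).
Local Notation Op := (Op A).

Lemma Op_eq (u v : Op) : (forall f x, sval u f x = sval v f x) -> u = v.
Proof.
case: u => u hu; case: v => v hv /= h.
have e : u = v by apply: funext => f; apply: funext => x; exact: h.
subst v; congr exist; exact: Prop_irrelevance.
Qed.

Definition Op0 : Op := exist _ _ (rep_zero A).
Definition Op1 : Op := exist _ _ (rep_id A).
Definition OpAdd (u v : Op) : Op := exist _ _ (rep_add (svalP u) (svalP v)).
Definition OpOpp (u : Op) : Op := exist _ _ (rep_opp (svalP u)).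
Definition OpMul (u v : Op) : Op := exist _ _ (rep_comp (svalP u) (svalP v)).

Lemma OpAddA : associative OpAdd.
Proof. by move=> u v w; apply: Op_eq => f x /=; rewrite addrA. Qed.
Lemma OpAddC : commutative OpAdd.
Proof. by move=> u v; apply: Op_eq => f x /=; rewrite addrC. Qed.
Lemma OpAdd0 : left_id Op0 OpAdd.
Proof. by move=> u; apply: Op_eq => f x /=; rewrite add0r. Qed.
Lemma OpAddN : left_inverse Op0 OpOpp OpAdd.
Proof. by move=> u; apply: Op_eq => f x /=; rewrite addNr. Qed.
Lemma OpMulA : associative OpMul.
Proof. by move=> u v w; apply: Op_eq => f x /=. Qed.
Lemma OpMul1 : left_id Op1 OpMul.
Proof. by move=> u; apply: Op_eq => f x /=. Qed.
Lemma OpMulr1 : right_id Op1 OpMul.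
Proof. by move=> u; apply: Op_eq => f x /=. Qed.
Lemma OpMulDl : left_distributive OpMul OpAdd.
Proof. by move=> u v w; apply: Op_eq => f x /=. Qed.
Lemma OpMulDr : right_distributive OpMul OpAdd.
Proof. by move=> u v w; apply: Op_eq => f x /=; rewrite (rep_addf (svalP u)). Qed.
End GenRing.

HB.instance Definition _ (D : pzRingType) (A : Act D) :=
  GRing.isPzRing.Build (Op A) (@OpAddA D A) (@OpAddC D A) (@OpAdd0 D A) (@OpAddN D A)
    (@OpMulA D A) (@OpMul1 D A) (@OpMulr1 D A) (@OpMulDl D A) (@OpMulDr D A).

Section GenFacts.
Variables (D : pzRingType) (A : Act D).
Lemma OpE_add (u v : Op A) f x : sval (u + v) f x = sval u f x + sval v f x. Proof. by []. Qed.
Lemma OpE_opp (u : Op A) f x : sval (- u) f x = - sval u f x. Proof. by []. Qed.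
Lemma OpE_sub (u v : Op A) f x : sval (u - v) f x = sval u f x - sval v f x. Proof. by []. Qed.
Lemma OpE_mul (u v : Op A) f x : sval (u * v) f x = sval u (sval v f) x. Proof. by []. Qed.
Lemma OpE_one f x : sval (1 : Op A) f x = f x. Proof. by []. Qed.
Lemma OpE_zero f x : sval (0 : Op A) f x = 0. Proof. by []. Qed.
Lemma OpE_sum (I : Type) (r : seq I) (F : I -> Op A) f x :
  sval (\sum_(i <- r) F i) f x = \sum_(i <- r) sval (F i) f x.
Proof. elim: r => [|a r IH]; first by rewrite !big_nil. by rewrite !big_cons OpE_add IH. Qed.
End GenFacts.

Section Mono.
Variables (D : pzRingType) (A : Act D).

Lemma rep_mono (c : D) (k : aK A) : rep (fun f x => wt x c * f (act x k)).
Proof. by exists [:: (c, k)] => f x; rewrite big_cons big_nil addr0. Qed.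

Definition mono (c : D) (k : aK A) : Op A := exist _ _ (rep_mono c k).

Lemma monoE c k f x : sval (mono c k) f x = wt x c * f (act x k). Proof. by []. Qed.

Lemma mono_add c c' k : mono (c + c') k = mono c k + mono c' k.
Proof. by apply: Op_eq => f x; rewrite OpE_add !monoE (homD (wt_hom x)) mulrDl. Qed.

Lemma mono0 k : mono 0 k = 0.
Proof. by apply: Op_eq => f x; rewrite OpE_zero monoE (hom0 (wt_hom x)) mul0r. Qed.

Lemma mono_sum (I : Type) (r : seq I) (P : pred I) (F : I -> D) k :
  mono (\sum_(i <- r | P i) F i) k = \sum_(i <- r | P i) mono (F i) k.
Proof. apply: (big_morph (fun c => mono c k)); [by move=> c c'; rewrite mono_add | exact: mono0]. Qed.

Lemma mono_mul c c' k k' : mono c k * mono c' k' = mono (c * kw k c') (kadd k k').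
Proof.
apply: Op_eq => f x; rewrite OpE_mul !monoE wtK actA (homM (wt_hom x)) mulrA //.
Qed.

Lemma Op_sum (u : Op A) : exists L : seq (D * aK A), u = \sum_(y <- L) mono y.1 y.2.
Proof.
case: u => u [L h]; exists L; apply: Op_eq => f x /=; rewrite OpE_sum h.
by apply: eq_bigr.
Qed.

Lemma rep_ext (u : Op A) f g x : (forall y, f y = g y) -> sval u f x = sval u g x.
Proof. by move=> h; have -> : f = g by apply: funext. Qed.
End Mono.

Section Conc.
Variables (D : nzRingType) (s si : D -> D).
Hypotheses (hs : ring_hom s) (c1 : cancel s si) (c2 : cancel si s).

Local Notation spz := (sp s si).

Definition actR (x : int * int) (k : nat * nat) : int * int := (x.1 + k.1%:Z, x.2 + k.2%:Z).
Definition kaddR (k k' : nat * nat) : nat * nat := (k.1 + k'.1, k.2 + k'.2)%N.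
Definition wtR (x : int * int) := spz (x.1 - x.2).
Definition kwR (k : nat * nat) := spz (k.1%:Z - k.2%:Z).

Lemma actR0 x : actR x (0, 0)%N = x.
Proof. by case: x => p q; rewrite /actR /= !addr0. Qed.
Lemma actRA x k k' : actR (actR x k) k' = actR x (kaddR k k').
Proof. by case: x => p q; rewrite /actR /kaddR /= !PoszD !addrA. Qed.
Lemma wtR_hom x : ring_hom (wtR x). Proof. exact: sp_hom. Qed.
Lemma wtRK x k c : wtR (actR x k) c = wtR x (kwR k c).
Proof.
rewrite /wtR /kwR -sp_add //; congr spz; case: x => p q; case: k => a b /=; lia.
Qed.

Definition AR : Act D := @MkAct D (int * int) (nat * nat) actR kaddR (0, 0)%N wtR kwR
  actR0 actRA wtR_hom wtRK.

Lemma actS0 (x : int) : x + 0 = x. Proof. by rewrite addr0. Qed.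
Lemma actSA (x k k' : int) : x + k + k' = x + (k + k'). Proof. by rewrite addrA. Qed.
Lemma wtS_hom x : ring_hom (spz x). Proof. exact: sp_hom. Qed.
Lemma wtSK x k c : spz (x + k) c = spz x (spz k c). Proof. exact: sp_add. Qed.

Definition AS : Act D := @MkAct D int int (fun x k => x + k) (fun k k' => k + k') 0 spz spz
  actS0 actSA wtS_hom wtSK.

Definition RR := Op AR.
Definition SS := Op AS.

Definition iota (d : D) : RR := mono (A:=AR) d (0, 0)%N.
Definition tk (i : 'I_2) : nat * nat := if val i == 0%N then (1, 0)%N else (0, 1)%N.
Definition tt (i : 'I_2) : RR := mono (A:=AR) 1 (tk i).

Definition Fg (g : int -> D) : int * int -> D := fun pq => g (pq.1 - pq.2).

Lemma rep_phi (r : RR) : rep (A:=AS) (fun g n => sval r (Fg g) (n, 0)).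
Proof.
case: r => r [L h] /=.
exists [seq (y.1, y.2.1%:Z - y.2.2%:Z) | y <- L] => g n.
rewrite h big_map; apply: eq_bigr => y _ /=.
rewrite /wtR /Fg /= subr0; congr (_ * g _); lia.
Qed.

Definition phi (r : RR) : SS := exist _ _ (rep_phi r).

Lemma phiE r g n : sval (phi r) g n = sval r (Fg g) (n, 0). Proof. by []. Qed.

Lemma rep_diag (r : RR) g p q : sval r (Fg g) (p, q) = sval r (Fg g) (p - q, 0).
Proof.
case: r => r [L h] /=; rewrite !h; apply: eq_bigr => y _.
rewrite /= /wtR /Fg /actR /= subr0; congr (_ * g _); lia.
Qed.

Lemma phi_hom : ring_hom phi.
Proof.
split.
- by move=> r r'; apply: Op_eq => g n.
- move=> r r'; apply: Op_eq => g n; rewrite OpE_mul !phiE OpE_mul.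
  apply: rep_ext => -[p q]; rewrite [RHS]/Fg /=; exact: rep_diag.
- apply: (@Op_eq _ AS) => g n; rewrite phiE.
  by rewrite (OpE_one (A:=AR)) (OpE_one (A:=AS)) /Fg /= subr0.
Qed.

Definition kpair (k : int) : nat * nat :=
  match k with Posz n => (n, 0)%N | Negz n => (0, n.+1)%N end.
Lemma kpairE k : (kpair k).1%:Z - (kpair k).2%:Z = k.
Proof. case: k => n /=; [by rewrite subr0 | by rewrite NegzE; lia]. Qed.

Lemma phi_mono c k : phi (mono (A:=AR) c k) = mono (A:=AS) c (k.1%:Z - k.2%:Z).
Proof.
apply: Op_eq => g n; rewrite phiE !monoE /= /wtR /Fg /actR /= subr0.
congr (_ * g _); lia.
Qed.

Lemma phi_sum (I : Type) (r : seq I) (F : I -> RR) : phi (\sum_(i <- r) F i) = \sum_(i <- r) phi (F i).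
Proof. exact: (hom_sum phi_hom). Qed.

Lemma phi_surj (v : SS) : exists r, phi r = v.
Proof.
have [L ->] := Op_sum v.
exists (\sum_(y <- L) mono (A:=AR) y.1 (kpair y.2)).
rewrite phi_sum; apply: eq_bigr => y _; by rewrite phi_mono kpairE.
Qed.

Lemma SS_nonzero : (1 : SS) != 0.
Proof.
apply/eqP => h.
have := congr1 (fun u : SS => sval u (fun _ => 1) 0) h.
rewrite OpE_one OpE_zero => /eqP; by rewrite oner_eq0.
Qed.

End Conc.

Lemma ffun2_eq n (e e' : {ffun 'I_2 -> 'I_n}) :
  (e == e') = ((e ord0 == e' ord0) && (e ord_max == e' ord_max)).
Proof.
apply/eqP/andP => [-> //|[/eqP h0 /eqP h1]].
apply/ffunP => -[[|[|i]] Hi].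
- by rewrite (_ : Ordinal Hi = ord0) //; apply: val_inj.
- by rewrite (_ : Ordinal Hi = ord_max) //; apply: val_inj.
- by [].
Qed.

Section Skew.
Variables (D : nzRingType) (s si : D -> D).
Hypotheses (hs : ring_hom s) (c1 : cancel s si) (c2 : cancel si s).
Local Notation spz := (sp s si).
Local Notation RR := (RR hs c1 c2).
Local Notation iota := (iota hs c1 c2).
Local Notation tt := (tt hs c1 c2).
Local Notation AR := (AR hs c1 c2).

Lemma kwR00 c : kwR s si (0, 0)%N c = c. Proof. by rewrite /kwR subrr. Qed.
Lemma kwR1 k : kwR s si k 1 = 1. Proof. exact: (hom1 (sp_hom hs c1 c2 _)). Qed.

Lemma iota1 : iota 1 = 1.
Proof.
apply: Op_eq => f x; rewrite monoE OpE_one /=.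
by rewrite (hom1 (wtR_hom hs c1 c2 x)) mul1r actR0.
Qed.

Lemma iota_hom : ring_hom iota.
Proof.
split.
- by move=> a b; rewrite /iota mono_add.
- by move=> a b; rewrite /iota mono_mul /= kwR00.
- exact: iota1.
Qed.

Lemma mono_pow k n : (mono (A:=AR) 1 k) ^+ n = mono (A:=AR) 1 (n * k.1, n * k.2)%N.
Proof.
elim: n => [|n IH]; first by rewrite expr0 -iota1.
rewrite exprS IH mono_mul /= kwR1 mul1r /kaddR /=; by rewrite !mulSn.
Qed.

Lemma monom_tt n (e : {ffun 'I_2 -> 'I_n}) c :
  iota c * monom tt e = mono (A:=AR) c ((e ord0 : nat), (e ord_max : nat)).
Proof.
rewrite /monom big_ord_recl big_ord_recl big_ord0 mulr1 /tt !mono_pow !mono_mul /=.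
rewrite /tk /= !kwR1 !mul1r kwR00 /kaddR /=.
have -> : lift ord0 ord0 = ord_max :> 'I_2 by apply: val_inj.
by rewrite mulr1 !muln1 !muln0 !addn0 !add0n.
Qed.

Lemma tt_comm i i' : tt i * tt i' = tt i' * tt i.
Proof. by rewrite /tt !mono_mul /= !kwR1 /kaddR addnC [(_.2 + _)%N]addnC. Qed.

Lemma tt_iota i a : tt i * iota a = iota (pair_fun s si i a) * tt i.
Proof.
rewrite /tt /iota !mono_mul /= kwR00 /kaddR /= !addn0 !add0n mul1r mulr1.
rewrite /tk /pair_fun; case: (val i == 0%N).
- by rewrite /kwR /=.
- by rewrite /kwR /=.
Qed.

Lemma pairz_eq n (e e' : {ffun 'I_2 -> 'I_n}) :
  (((e' ord0 : nat)%:Z, (e' ord_max : nat)%:Z) == ((e ord0 : nat)%:Z, (e ord_max : nat)%:Z))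
  = (e' == e).
Proof. by rewrite ffun2_eq xpair_eqE !eqz_nat. Qed.

Lemma indepR : left_alg_indep iota tt.
Proof.
move=> n C h e.
have h' : \sum_(e' : {ffun 'I_2 -> 'I_n}) mono (A:=AR) (C e') ((e' ord0 : nat), (e' ord_max : nat)) = 0.
  rewrite -[RHS]h; apply: eq_bigr => e' _; by rewrite monom_tt.
pose dl := fun pq : int * int => if pq == ((e ord0 : nat)%:Z, (e ord_max : nat)%:Z) then (1 : D) else 0.
have := congr1 (fun u : RR => sval u dl (0, 0)) h'.
rewrite OpE_sum OpE_zero /=.
rewrite (bigD1 e) //= big1 ?addr0.
- by rewrite /wtR /dl /actR /= ?subrr ?sp0 !add0r pairz_eq eqxx mulr1.
- move=> e' ne; by rewrite /dl /actR /= !add0r pairz_eq (negbTE ne) mulr0.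
Qed.

Lemma spanR : left_monom_span iota tt.
Proof.
move=> v.
have [L ->] := Op_sum v.
pose N := (\max_(y <- L) (y.2.1 + y.2.2))%N.
exists N.+1.
exists (fun e : {ffun 'I_2 -> 'I_N.+1} => \sum_(y <- L | y.2 == ((e ord0 : nat), (e ord_max : nat))) y.1).
symmetry.
transitivity (\sum_(e : {ffun 'I_2 -> 'I_N.+1}) \sum_(y <- L)
   (if y.2 == ((e ord0 : nat), (e ord_max : nat)) then mono (A:=AR) y.1 y.2 else 0)).
  apply: eq_bigr => e _; rewrite monom_tt mono_sum big_mkcond; apply: eq_bigr => y _.
  by case: eqP => // ->.
rewrite exchange_big; apply: eq_big_seq => y yL.
rewrite -big_mkcond /=.
have hb : (y.2.1 + y.2.2 <= N)%N := (@leq_bigmax_seq _ L xpredT (fun y => y.2.1 + y.2.2)%N y yL isT).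
pose ey : {ffun 'I_2 -> 'I_N.+1} := [ffun i : 'I_2 => if val i == 0%N then inord y.2.1 else inord y.2.2].
rewrite (big_pred1 ey) // => e.
rewrite /= ffun2_eq !ffunE /=.
case: y yL hb {ey} => c [a b] yL hb /=.
rewrite xpair_eqE -!val_eqE /= !inordK; first by rewrite (eq_sym a) (eq_sym b).
- move: hb => /=; lia.
- move: hb => /=; lia.
Qed.

Lemma skewR : is_skew_poly_ring (pair_fun s si) iota tt.
Proof.
split.
- exact: iota_hom.
- exact: tt_comm.
- exact: tt_iota.
- exact: indepR.
- exact: spanR.
Qed.
End Skew.

Import Order.TTheory Num.Theory.

Section SAna.
Variables (D : unitRingType) (s si : D -> D).
Hypotheses (hs : ring_hom s) (c1 : cancel s si) (c2 : cancel si s).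
Hypothesis hdiv : division_ring D.
Local Notation spz := (sp s si).
Local Notation SS := (SS hs c1 c2).
Local Notation AS := (AS hs c1 c2).
Local Notation mS := (mono (A:=AS)).

Lemma mSE c k g n : sval (mS c k) g n = spz n c * g (n + k). Proof. by []. Qed.

Definition dl (k : int) : int -> D := fun n => if n == k then 1 else 0.
Definition coef (k : int) (u : SS) : D := sval u (dl k) 0.

Lemma rightscal (u : SS) g x m : sval u (fun n => g n * x) m = sval u g m * x.
Proof.
have [L ->] := Op_sum u; rewrite !OpE_sum mulr_suml; apply: eq_bigr => y _.
by rewrite !mSE mulrA.
Qed.

Lemma coef_mulr (u : SS) k b : coef k (u * mS b 0) = coef k u * spz k b.
Proof.
rewrite /coef OpE_mul -rightscal; apply: rep_ext => n.
rewrite mSE addr0 /dl; case: eqP => [->|_]; by rewrite ?mulr1 ?mul1r ?mulr0 ?mul0r.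
Qed.

Lemma coef_mull (u : SS) k d : coef k (mS d 0 * u) = d * coef k u.
Proof. by rewrite /coef OpE_mul mSE addr0. Qed.

Lemma coef_sum (L : seq (D * int)) k :
  coef k (\sum_(y <- L) mS y.1 y.2) = \sum_(y <- L | y.2 == k) y.1.
Proof.
rewrite /coef OpE_sum [RHS]big_mkcond; apply: eq_bigr => y _.
by rewrite mSE add0r /dl; case: eqP => _; rewrite ?mulr1 ?mulr0.
Qed.

Lemma regroup (L : seq (D * int)) (U : seq int) : uniq U -> (forall y, y \in L -> y.2 \in U) ->
  \sum_(y <- L) mS y.1 y.2 = \sum_(k <- U) mS (\sum_(y <- L | y.2 == k) y.1) k.
Proof.
move=> uU hU; symmetry.
transitivity (\sum_(k <- U) \sum_(y <- L) (if y.2 == k then mS y.1 y.2 else 0)).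
  apply: eq_bigr => k _; rewrite mono_sum big_mkcond; apply: eq_bigr => y _.
  by case: eqP => // ->.
rewrite exchange_big; apply: eq_big_seq => y yL.
rewrite (bigD1_seq y.2) ?hU //= eqxx big1 ?addr0 // => k.
by rewrite eq_sym => /negbTE ->.
Qed.

Lemma coef0_eq0 (u : SS) : (forall k, coef k u = 0) -> u = 0.
Proof.
move=> h; have [L eL] := Op_sum u.
rewrite eL (@regroup L (undup [seq y.2 | y <- L])) ?undup_uniq //; last first.
  by move=> y yL; rewrite mem_undup; apply: map_f.
apply: big1 => k _; by rewrite -coef_sum -eL h mono0.
Qed.

Lemma coef_pure (u : SS) k : (forall k', k' != k -> coef k' u = 0) -> u = mS (coef k u) k.
Proof.
move=> h; have [L eL] := Op_sum u.
have hU : forall y, y \in L -> y.2 \in undup (k :: [seq y.2 | y <- L]).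
  by move=> y yL; rewrite mem_undup inE; apply/orP; right; apply: map_f.
have hk : k \in undup (k :: [seq y.2 | y <- L]) by rewrite mem_undup inE eqxx.
rewrite {1}eL (@regroup L (undup (k :: [seq y.2 | y <- L])) (undup_uniq _) hU).
rewrite (bigD1_seq k hk (undup_uniq _)) -coef_sum -eL.
under eq_bigr => i nk do rewrite -coef_sum -eL h // mono0.
by rewrite big1_eq Monoid.mulm1.
Qed.


Lemma spz_neq0 k c : c != 0 -> spz k c != 0.
Proof.
move=> hc; apply/eqP => h; move/eqP: hc; apply.
by rewrite -(sp_K' c1 c2 k c) h (hom0 (sp_hom hs c1 c2 _)).
Qed.

Lemma mulf_neq0' (c d : D) : c != 0 -> d != 0 -> c * d != 0.
Proof.
move=> hc hd; apply/eqP => h; move/eqP: hd; apply; apply: (mulrI (hdiv hc)).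
by rewrite h mulr0.
Qed.

Lemma mS1 : mS 1 0 = 1.
Proof.
apply: Op_eq => g n; rewrite mSE (OpE_one (A:=AS)) addr0.
by rewrite (hom1 (sp_hom hs c1 c2 _)) mul1r.
Qed.

Definition PP (u : SS) (k : int) := exists c, c != 0 /\ u = mS c k.

Lemma PP1 : PP 1 0. Proof. by exists 1; rewrite oner_neq0 mS1. Qed.

Lemma PPM u k v k' : PP u k -> PP v k' -> PP (u * v) (k + k').
Proof.
move=> [c [hc ->]] [c' [hc' ->]]; exists (c * spz k c'); split.
  exact: mulf_neq0' (spz_neq0 _ hc').
by rewrite mono_mul.
Qed.

Lemma PPX u k n : PP u k -> PP (u ^+ n) (n%:Z * k).
Proof.
move=> h; elim: n => [|n IH]; first by rewrite expr0 mul0r; exact: PP1.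
rewrite exprS (_ : n.+1%:Z * k = k + n%:Z * k); first exact: PPM.
by rewrite -addn1 PoszD mulrDl mul1r addrC.
Qed.

Lemma PPmonom m n (a : 'I_m -> SS) kk (e : {ffun 'I_m -> 'I_n}) :
  (forall i, PP (a i) (kk i)) -> PP (monom a e) (\sum_(i < m) (e i : nat)%:Z * kk i).
Proof. move=> h; rewrite /monom; apply: (big_ind2 PP PP1 PPM) => i _; exact: PPX. Qed.

Lemma inner_contra k k' c c' : ~ finite_inner_order s -> k' < k -> c != 0 -> c' != 0 ->
  (forall b, c * spz k b * c^-1 = c' * spz k' b * c'^-1) -> False.
Proof.
move=> nfi lt hc hc' h; apply: nfi.
have [d hd] : exists d : nat, k = k' + d%:Z by exists (absz (k - k')); lia.
exists d; split; first lia.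
have uc := hdiv hc; have uc' := hdiv hc'.
exists (c^-1 * c'); split; first by rewrite unitrMl // unitrV.
move=> r.
have := h (spz (- k') r).
rewrite sp_K // -sp_add // (_ : k + - k' = d%:Z); last by lia.
rewrite /= => e.
rewrite invrM ?unitrV // invrK.
rewrite [RHS](_ : _ = c^-1 * (c' * r * c'^-1) * c); last by rewrite !mulrA.
by rewrite -e !mulrA mulVr // mul1r mulrVK.
Qed.

Lemma auto_pure (a : SS) (tau : D -> D) : ~ finite_inner_order s -> a != 0 ->
  (forall b, a * mS b 0 = mS (tau b) 0 * a) -> exists k, PP a k.
Proof.
move=> nfi a0 ha.
have [k hk] : exists k, coef k a != 0.
  apply: Classical_Prop.NNPP => hn; move/eqP: a0; apply; apply: coef0_eq0 => k.
  apply/eqP; apply/negPn/negP => hk; apply: hn; by exists k.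
have eqc : forall k' b, coef k' a * spz k' b = tau b * coef k' a.
  by move=> k' b; rewrite -coef_mulr -coef_mull ha.
have eqc' : forall k' b, coef k' a != 0 -> tau b = coef k' a * spz k' b * (coef k' a)^-1.
  by move=> k' b h; rewrite eqc mulrK //; exact: hdiv.
have other : forall k', k' != k -> coef k' a = 0.
  move=> k' nk; apply: Classical_Prop.NNPP => hn.
  have hk' : coef k' a != 0 by apply/eqP.
  case: (ltgtP k k') => [lt|lt|eq]; last by move/eqP: nk; apply.
  - apply: (inner_contra nfi lt hk' hk) => b; by rewrite -!eqc'.
  - apply: (inner_contra nfi lt hk hk') => b; by rewrite -!eqc'.
exists k, (coef k a); split => //; exact: coef_pure.
Qed.
End SAna.

Section Band.
Variables (D : unitRingType) (s si : D -> D).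
Hypotheses (hs : ring_hom s) (c1 : cancel s si) (c2 : cancel si s).
Local Notation spz := (sp s si).
Local Notation SS := (SS hs c1 c2).
Local Notation AS := (AS hs c1 c2).
Local Notation mS := (mono (A:=AS)).

Variable sg : int.
Hypothesis hsg : sg = 1 \/ sg = -1.

Definition Band (N : nat) (u : SS) := forall (a0 : int) g, (forall n, a0 <= sg * n -> g n = 0) ->
  forall n, a0 + N%:Z <= sg * n -> sval u g n = 0.

Lemma Band_le N M u : (N <= M)%N -> Band N u -> Band M u.
Proof. move=> le h a0 g hg n hn; apply: (h a0 g hg); lia. Qed.

Lemma Band0 N : Band N 0.
Proof. by move=> a0 g hg n hn; rewrite OpE_zero. Qed.

Lemma Band_add N u v : Band N u -> Band N v -> Band N (u + v).
Proof. by move=> hu hv a0 g hg n hn; rewrite OpE_add (hu a0 g hg n hn) (hv a0 g hg n hn) addr0. Qed.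

Lemma Band_sub N u v : Band N u -> Band N v -> Band N (u - v).
Proof. by move=> hu hv a0 g hg n hn; rewrite OpE_sub (hu a0 g hg n hn) (hv a0 g hg n hn) subr0. Qed.

Lemma Band_mul N M v u : Band N v -> Band M u -> Band (M + N) (v * u).
Proof.
move=> hv hu a0 g hg n hn; rewrite OpE_mul.
apply: (hv (a0 + M%:Z)) => [n' hn'|]; first exact: (hu a0 g hg).
move: hn; rewrite PoszD addrA //.
Qed.

Lemma Band1 : Band 0 1.
Proof. move=> a0 g hg n hn; rewrite (OpE_one (A:=AS)); apply: hg; lia. Qed.

Lemma Band_mono c k : 0 <= sg * k -> Band 0 (mS c k).
Proof.
move=> hk a0 g hg n hn; rewrite mSE hg ?mulr0 //; rewrite mulrDr; lia.
Qed.

Lemma Band_monoN c k : Band (absz k) (mS c k).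
Proof.
move=> a0 g hg n hn; rewrite mSE hg ?mulr0 //; rewrite mulrDr.
case: hsg => e; rewrite e in hn *; rewrite ?mul1r ?mulN1r in hn *; lia.
Qed.

Lemma Band_any (u : SS) : exists N, Band N u.
Proof.
have [L ->] := Op_sum u.
exists (\sum_(y <- L) absz y.2)%N.
elim: L => [|y L IH]; first by rewrite !big_nil; exact: Band0.
rewrite !big_cons; apply: Band_add.
- apply: (@Band_le (absz y.2)); [exact: leq_addr | exact: Band_monoN].
- apply: (Band_le _ IH); exact: leq_addl.
Qed.

Lemma Band_counter N : ~ Band N (mS 1 (- (sg * (N.+1)%:Z))).
Proof.
move=> h.
have hg : forall n, 0 <= sg * n -> @dl D (- sg) n = 0.
  move=> n hn; rewrite /dl; case: eqP => // en; exfalso; move: hn; rewrite en.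
  case: hsg => ->; lia.
have hn : 0 + N%:Z <= sg * (sg * N%:Z) by case: hsg => ->; lia.
have := h 0 _ hg _ hn.
rewrite mSE (hom1 (sp_hom hs c1 c2 _)) mul1r /dl.
have -> : sg * N%:Z + - (sg * N.+1%:Z) = - sg by case: hsg => ->; lia.
by rewrite eqxx => /eqP; rewrite oner_eq0.
Qed.
End Band.

Lemma sgn_same (x y : int) : 0 < x * y -> (absz y)%:Z * x = (absz x)%:Z * y.
Proof. nia. Qed.
Lemma sgn_opp (x y : int) : x * y <= 0 -> (absz y)%:Z * x + (absz x)%:Z * y = 0.
Proof. nia. Qed.

Lemma prod_zero (R : pzRingType) (I : eqType) (r : seq I) (F : I -> R) i :
  i \in r -> F i = 0 -> \prod_(j <- r) F j = 0.
Proof.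
elim: r => [//|x r IH]; rewrite inE big_cons => /orP [/eqP -> ->|ir hi].
  by rewrite mul0r.
by rewrite IH ?mulr0.
Qed.

Section Final.
Variables (D : unitRingType) (s si : D -> D).
Hypotheses (hs : ring_hom s) (c1 : cancel s si) (c2 : cancel si s).
Hypothesis hdiv : division_ring D.
Local Notation spz := (sp s si).
Local Notation SS := (SS hs c1 c2).
Local Notation AS := (AS hs c1 c2).
Local Notation mS := (mono (A:=AS)).
Local Notation j := (fun d => phi (iota hs c1 c2 d)).

Lemma jE d : phi (iota hs c1 c2 d) = mS d 0.
Proof. by rewrite /iota phi_mono /= subrr. Qed.

Lemma dep_contra m n (a : 'I_m -> SS) kk (e e' : {ffun 'I_m -> 'I_n}) :
  (forall i, PP (a i) (kk i)) -> e != e' ->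
  \sum_(i < m) (e i : nat)%:Z * kk i = \sum_(i < m) (e' i : nat)%:Z * kk i ->
  ~ left_alg_indep j a.
Proof.
move=> hP ne hdeg ind.
have [ce [hce eme]] := PPmonom hdiv e hP.
have [ce' [hce' eme']] := PPmonom hdiv e' hP.
rewrite -hdeg in eme'.
pose C := fun x : {ffun 'I_m -> 'I_n} =>
  if x == e then (1 : D) else if x == e' then - (ce * ce'^-1) else 0.
have ne' : (e' == e) = false by rewrite eq_sym (negbTE ne).
have h0 : \sum_(x : {ffun 'I_m -> 'I_n}) phi (iota hs c1 c2 (C x)) * monom a x = 0.
  rewrite (bigD1 e) //= (bigD1 e') /=; last by rewrite ne'.
  rewrite big1 ?addr0; last first.
    move=> x /andP [nx nx']; by rewrite /C (negbTE nx) (negbTE nx') jE mono0 mul0r.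
  rewrite /C ne' !eqxx !jE eme eme' !mono_mul /= !add0r mul1r -mono_add.
  by rewrite mulNr mulrVK ?subrr ?mono0 //; exact: hdiv.
have := ind n C h0 e; rewrite /C eqxx => /eqP; by rewrite oner_eq0.
Qed.

Lemma a_nz m (a : 'I_m -> SS) : left_alg_indep j a -> forall i, a i != 0.
Proof.
move=> ind i; apply/eqP => ai0.
pose e1 : {ffun 'I_m -> 'I_2} := [ffun i' => if i' == i then ord_max else ord0].
pose C := fun x : {ffun 'I_m -> 'I_2} => if x == e1 then (1 : D) else 0.
have h0 : \sum_(x : {ffun 'I_m -> 'I_2}) phi (iota hs c1 c2 (C x)) * monom a x = 0.
  apply: big1 => x _; rewrite /C; case: eqP => [->|_]; last by rewrite jE mono0 mul0r.
  rewrite /monom (prod_zero (i := i)) ?mulr0 ?mem_index_enum // ffunE eqxx ai0 expr1 //.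
have := ind 2 C h0 e1; rewrite /C eqxx => /eqP; by rewrite oner_eq0.
Qed.

Lemma band_contra m (a : 'I_m -> SS) kk (sg : int) : (sg = 1 \/ sg = -1) ->
  (forall i, PP (a i) (kk i)) -> (forall i, 0 <= sg * kk i) ->
  ~ left_fin_gen (gen_subring (fun x => (exists d, x = j d) \/ exists i, x = a i)).
Proof.
move=> hsg hP hk [k [g hfg]].
have [Nf hNf] := boolp.choice (fun l => Band_any hsg (g l)).
pose N := (\max_(l < k) Nf l)%N.
have [b [hb e]] := hfg (mS 1 (- (sg * N.+1%:Z))).
apply: (@Band_counter _ _ _ hs c1 c2 sg hsg N); rewrite e.
apply: (big_ind (@Band _ _ _ hs c1 c2 sg N)); [exact: Band0 | exact: Band_add|] => l _.
apply: (@Band_le _ _ _ hs c1 c2 sg hsg (Nf l + 0)); first by rewrite addn0 /N; exact: (@leq_bigmax _ Nf l).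
apply: Band_mul; last exact: hNf.
apply: (hb l).
- move=> x [[d ->]|[i ->]]; first by rewrite jE; apply: Band_mono => //; rewrite mulr0.
  have [c [_ ->]] := hP i; exact: Band_mono.
- exact: Band1.
- move=> u v; exact: Band_sub.
- move=> u v hu hv; exact: (Band_mul hu hv).
Qed.
End Final.

Theorem proposition5p7 (D : unitRingType) (sigma sigmai : D -> D) :
  division_ring D ->
  ring_aut sigma -> cancel sigma sigmai -> cancel sigmai sigma ->
  ~ finite_inner_order sigma ->
  ~ aut_normalizable_tuple (pair_fun sigma sigmai).
Proof.
move=> hdiv [hs _] c1 c2 nfi H.
have := H _ _ _ (skewR hs c1 c2) _ (@phi _ _ _ hs c1 c2) (phi_hom hs c1 c2)
  (@phi_surj _ _ _ hs c1 c2) (SS_nonzero hs c1 c2).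
case=> m [a [tau [_ [_ [_ [autom [ind fg]]]]]]].
have anz := a_nz ind.
have hpure : forall i, exists k, PP (a i) k.
  move=> i; apply: (auto_pure hdiv (tau := tau i) nfi (anz i)) => b.
  rewrite -!jE; exact: autom.
have [kk hkk] := boolp.choice hpure.
case: (Classical_Prop.classic (exists i, kk i = 0)) => [[i ki0]|nz].
  pose e : {ffun 'I_m -> 'I_2} := [ffun i' => if i' == i then ord_max else ord0].
  pose e' : {ffun 'I_m -> 'I_2} := [ffun => ord0].
  apply: (dep_contra hdiv (e := e) (e' := e') hkk _ _ ind).
  - apply/eqP => /ffunP /(_ i); rewrite !ffunE eqxx; by [].
  - apply: eq_bigr => i' _; rewrite !ffunE /=; case: eqP => [->|_]; by rewrite ?ki0 /= ?mulr0 ?mul0r.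
have nz' : forall i, kk i != 0 by move=> i; apply/eqP => h; apply: nz; exists i.
case: (leqP m 1) => hm.
  pose sg : int := if [exists i : 'I_m, kk i < 0] then -1 else 1.
  apply: (band_contra (sg := sg) _ hkk _ fg).
  - rewrite /sg; case: ifP => _; [by right | by left].
  - move=> i; rewrite /sg; case: existsP => [[i0 hi0]|hn].
    + have -> : i = i0 by apply: ord_inj; move: (ltn_ord i) (ltn_ord i0); lia.
      rewrite mulN1r oppr_ge0; exact: ltW.
    + rewrite mul1r leNgt; apply/negP => h; apply: hn; by exists i.
pose i0 : 'I_m := Ordinal (ltnW hm).
pose i1 : 'I_m := Ordinal hm.
have ne01 : i1 != i0 by [].
pose k0 := kk i0; pose k1 := kk i1.
pose n := (absz k0 + absz k1).+1.
pose mk (p q : nat) : {ffun 'I_m -> 'I_n} :=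
  [ffun i => inord (if i == i0 then p else if i == i1 then q else 0%N)].
have deg_mk : forall p q, (p <= absz k0 + absz k1)%N -> (q <= absz k0 + absz k1)%N ->
    \sum_(i < m) (mk p q i : nat)%:Z * kk i = p%:Z * k0 + q%:Z * k1.
  move=> p q hp hq.
  rewrite (bigD1 i0) //= (bigD1 i1) /=; last by [].
  rewrite big1 ?addr0; last first.
    move=> x /andP [nx0 nx1]; by rewrite ffunE (negbTE nx0) (negbTE nx1) inordK ?mul0r.
  rewrite /mk !ffunE eqxx (_ : (i1 == i0) = false) // eqxx !inordK //; lia.
have mk_ne : forall p q p' q', (p <= absz k0 + absz k1)%N -> (p' <= absz k0 + absz k1)%N ->
    p != p' -> mk p q != mk p' q'.
  move=> p q p' q' hp hp' npp; apply/eqP => /ffunP /(_ i0); rewrite !ffunE eqxx.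
  move/(congr1 (@nat_of_ord n)); rewrite !inordK; first by move=> h; rewrite h eqxx in npp.
  - rewrite /n; lia.
  - rewrite /n; lia.
have hk0 : absz k1 != 0%N by rewrite absz_eq0; exact: nz'.
case: (ltrP 0 (k0 * k1)) => hsgn.
- apply: (dep_contra hdiv (e := mk (absz k1) 0%N) (e' := mk 0%N (absz k0)) hkk _ _ ind).
  + apply: mk_ne; [lia | lia | exact: hk0].
  + rewrite !deg_mk; [|lia|lia|lia|lia]; rewrite !mul0r addr0 add0r; exact: sgn_same.
- apply: (dep_contra hdiv (e := mk (absz k1) (absz k0)) (e' := mk 0%N 0%N) hkk _ _ ind).
  + apply: mk_ne; [lia | lia | exact: hk0].
  + rewrite !deg_mk; [|lia|lia|lia|lia]; rewrite !mul0r addr0 sgn_opp //.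
Qed.
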